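(* Let $X$ be a stacked simplicial complex of dimension $d$, and let $h,k$ be faces of $X$ whose union $h\cup k$ is not contained in any codimension one face. Then there exists a unique path between $h$ and $k$.
   Context: A simplicial complex $X$ on a finite vertex set $V$ is a family of subsets (faces) of $V$ closed under taking subsets, every element of $V$ lying in some face; facets are inclusion-maximal faces. $X$ is pure of dimension $d$ if every facet has $d+1$ elements; a codimension one face is a face with $d$ elements. $X$ is stacked if it is pure of some dimension $d$ and its facets can be ordered $F_0,F_1,\dots,F_k$ (a stacking order) such that for each $p\ge 1$, $F_p$ contains exactly one vertex $v_p$ not in $F_0\cup\dots\cup F_{p-1}$ (called the free vertex of $F_p$), and $F_p\setminus\{v_p\}\subseteq F_j$ for some $j<p$. A walk is a sequence of facets $f_1,\dots,f_p$ ($p\ge 1$) such that each $f_i\cap f_{i+1}$ has exactly $d$ elements; a path is a walk in which the faces $f_i\cap f_{i+1}$, $1\le i<p$, are pairwise distinct. For faces $h,k$ such that $h\cup k$ is not contained in any codimension one face, a path between $h$ and $k$, written $h\,|\,f_1,\dots,f_p\,|\,k$, is a path $f_1,\dots,f_p$ with $h\subseteq f_1$, $k\subseteq f_p$, and, if $p\ge 2$, $h\not\subseteq f_1\cap f_2$ and $k\not\subseteq f_p\cap f_{p-1}$. *)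

(* Defs.v *)
From mathcomp Require Import all_boot.
Set Implicit Arguments. Unset Strict Implicit. Unset Printing Implicit Defensive.

Section Simplicial.
Variable V : finType.
Implicit Types (X : {set {set V}}) (F G h k : {set V}) (s : seq {set V}).

Definition simplicial_complex X : Prop :=
  (forall F G, F \in X -> G \subset F -> G \in X) /\
  (forall v : V, exists F, F \in X /\ v \in F).

Definition facet X F : bool :=
  (F \in X) && [forall G in X, (F \subset G) ==> (G == F)].

Definition pure X (d : nat) : Prop :=
  forall F, facet X F -> #|F| = d.+1.

Definition codim1_face X (d : nat) F : bool := (F \in X) && (#|F| == d).

Definition stacking_order X s : Prop :=
  s != [::] /\ uniq s /\ (forall F, F \in s = facet X F) /\
  forall p, 0 < p < size s ->
    exists v : V,
      [set x in nth set0 s p | x \notin \bigcup_(j < p) nth set0 s j] = [set v] /\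
      exists2 j, j < p & nth set0 s p :\ v \subset nth set0 s j.

Definition stacked X (d : nat) : Prop :=
  pure X d /\ exists s, stacking_order X s.

Definition consec_caps s : seq {set V} :=
  [seq nth set0 s i :&: nth set0 s i.+1 | i <- iota 0 (size s).-1].

Definition walk X (d : nat) s : Prop :=
  s != [::] /\ (forall f, f \in s -> facet X f) /\
  (forall i, i.+1 < size s -> #|nth set0 s i :&: nth set0 s i.+1| = d).

Definition cpath X (d : nat) s : Prop := walk X d s /\ uniq (consec_caps s).

Definition path_between X (d : nat) h k s : Prop :=
  cpath X d s /\
  h \subset nth set0 s 0 /\ k \subset nth set0 s (size s).-1 /\
  (2 <= size s ->
     ~~ (h \subset nth set0 s 0 :&: nth set0 s 1) /\
     ~~ (k \subset nth set0 s (size s).-1 :&: nth set0 s (size s).-2)).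

End Simplicial.

(* Main.v *)
Require Import Defs.
From mathcomp Require Import all_boot.
Set Implicit Arguments. Unset Strict Implicit. Unset Printing Implicit Defensive.

Section Stk.
Variables (V : finType) (d : nat).
Implicit Types (t P Q T : seq {set V}) (h k c R G : {set V}).

Fixpoint caps P := match P with
  | x :: ((y :: _) as P') => (x :&: y) :: caps P'
  | _ => [::] end.

Definition pth t P := [&& P != [::], all (fun x => x \in t) P,
   all (fun c => #|c| == d) (caps P) & uniq (caps P)].
Definition sc h P := (h \subset nth set0 P 0) &&
   ((1 < size P) ==> ~~ (h \subset nth set0 P 0 :&: nth set0 P 1)).
Definition pb t h k P := [&& pth t P, sc h P & sc k (rev P)].

Lemma caps_rcons P x y :
  caps (rcons (x :: P) y) = rcons (caps (x :: P)) (last x P :&: y).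
Proof. by elim: P x => [|z P IH] x //=; move: (IH z) => /= ->. Qed.

Lemma caps_rev P : caps (rev P) = rev (caps P).
Proof.
elim: P => [|x P IH] //; case: P IH => [|y P] IH //.
rewrite rev_cons; case E: (rev (y :: P)) => [|z P'].
  by move/(f_equal size): E; rewrite size_rev.
rewrite caps_rcons -E IH /= rev_cons; congr rcons.
have -> : last z P' = y by move: (congr1 (last set0) E); rewrite rev_cons last_rcons /= => <-.
by rewrite setIC.
Qed.

Lemma pth_rev t P : pth t (rev P) = pth t P.
Proof.
rewrite /pth caps_rev all_rev rev_uniq all_rev.
have -> : (rev P != [::]) = (P != [::]) by case: P => // x s; rewrite rev_cons; case: (rev s).
done.
Qed.

Lemma pb_rev t h k P : pb t h k P = pb t k h (rev P).
Proof. by rewrite /pb revK pth_rev; congr andb; rewrite andbC. Qed.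

Lemma caps_cat s1 x s2 : caps (s1 ++ x :: s2) = caps (rcons s1 x) ++ caps (x :: s2).
Proof.
elim: s1 => [|a s1 IH] //=.
case: s1 IH => [|b s1] IH //=; by move: IH => /= ->.
Qed.


Lemma headrev (s : seq {set V}) : head set0 (rev s) = last set0 s.
Proof. by case/lastP: s => [|s x] //; rewrite rev_rcons last_rcons. Qed.
Lemma lastrev (s : seq {set V}) : last set0 (rev s) = head set0 s.
Proof. by case: s => [|x s] //; rewrite rev_cons last_rcons. Qed.

Lemma caps_rcons2 s a y : caps (rcons (rcons s a) y) = rcons (caps (rcons s a)) (a :&: y).
Proof. by case: s => [|x s] //; rewrite -[rcons (x :: s) a]/(x :: rcons s a) caps_rcons last_rcons. Qed.

Lemma caps_catl s1 s2 : exists u, caps (s1 ++ s2) = caps s1 ++ u.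
Proof.
elim: s1 => [|x s1 IH]; first by exists (caps s2).
case: s1 IH => [|y s1] [u IH] /=; first by exists (caps (x :: s2)).
by exists u; move: IH => /= ->.
Qed.

Lemma pth_tail t x P : pth t (x :: P) -> P != [::] -> pth t P.
Proof.
case: P => [|y P] // /and4P [_ /= /andP [_ Ha] /andP [_ Hc] /andP [_ Hu]] _.
by apply/and4P.
Qed.

Lemma pth_cat_l t s1 s2 : pth t (s1 ++ s2) -> s1 != [::] -> pth t s1.
Proof.
case: (caps_catl s1 s2) => u Hu /and4P [_]; rewrite Hu !all_cat cat_uniq.
by move=> /andP [Ha _] /andP [Hc _] /and3P [Hq _ _] Hn; apply/and4P.
Qed.

Lemma firstcap P : 1 < size P -> nth set0 P 0 :&: nth set0 P 1 \in caps P.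
Proof. by case: P => [|x [|y P]] //= _; rewrite mem_head. Qed.

Lemma pth_mono t t' P : {subset t <= t'} -> pth t P -> pth t' P.
Proof.
move=> Hs /and4P [H1 H2 H3 H4]; apply/and4P; split => //.
by apply/allP => x /(allP H2) /Hs.
Qed.

Inductive stk : seq {set V} -> Prop :=
| stk1 (F : {set V}) : #|F| = d.+1 -> stk [:: F]
| stkS t (G : {set V}) (v : V) (F : {set V}) : stk t -> #|G| = d.+1 -> v \in G -> (forall U : {set V}, U \in t -> v \notin U) ->
    F \in t -> G :\ v \subset F -> stk (rcons t G).

Lemma stk_size t : stk t -> forall F, F \in t -> #|F| = d.+1.
Proof.
elim => [F HF|t0 G v F _ IH HG _ _ _ _] T; first by rewrite inE => /eqP ->.
by rewrite mem_rcons inE => /orP [/eqP ->|/IH].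
Qed.

Definition conv t := forall P k, pth t P -> k \subset head set0 P -> k \subset last set0 P ->
  all (fun c => k \subset c) (caps P).

Lemma sc_caps t T R c : conv t -> pth t T -> sc R T -> c \in caps T -> ~~ (R \subset c).
Proof.
move=> Hc HT /andP [H0 H1] Hin; apply/negP => HRc.
have [s1 [a [b [s2 [ET Ec]]]]] : exists s1 a b s2, T = s1 ++ a :: b :: s2 /\ c = a :&: b.
  elim: T Hin {HT H0 H1} => [|x T IH] //; case: T IH => [|y T] IH //.
  rewrite /= inE => /orP [/eqP ->|/IH [s1 [a [b [s2 [-> ->]]]]]].
    by exists [::], x, y, T.
  by exists (x :: s1), a, b, s2.
set Pr := s1 ++ [:: a; b].
have ET' : T = Pr ++ s2 by rewrite ET /Pr -catA.
have HPr : pth t Pr by apply: (pth_cat_l (s2 := s2)); [by rewrite -ET' | by rewrite /Pr; case: (s1)].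
have sPr : 1 < size Pr by rewrite /Pr size_cat /= addn2.
have n0 : nth set0 T 0 = nth set0 Pr 0 by rewrite ET' nth_cat (ltn_trans _ sPr).
have n1 : nth set0 T 1 = nth set0 Pr 1 by rewrite ET' nth_cat sPr.
have := Hc Pr R HPr.
rewrite -nth0 -n0 H0 /Pr last_cat /= => /(_ isT).
have -> : R \subset b by apply: (subset_trans HRc); rewrite Ec subsetIr.
move=> /(_ isT) /allP /(_ _ (firstcap sPr)).
rewrite -n0 -n1 => HH.
move: H1; rewrite HH ET' size_cat (leq_trans sPr (leq_addr _ _)).
done.
Qed.


Lemma conv1 (F : {set V}) : #|F| = d.+1 -> conv [:: F].
Proof.
move=> HF [|x [|y P]] k // /and4P [_ /= /and3P [] ].
rewrite !inE => /eqP -> /eqP -> _ /andP [] .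
by rewrite setIid HF eqn_leq ltnn.
Qed.

Section Step.
Variables (t : seq {set V}) (G : {set V}) (v : V) (F0 : {set V}).
Hypotheses (HG : #|G| = d.+1) (Hv : v \in G)
  (Hnv : forall U, U \in t -> v \notin U) (HF0 : F0 \in t) (HR : G :\ v \subset F0).

Lemma cardR : #|G :\ v| = d.
Proof. by move: HG; rewrite (cardsD1 v G) Hv add1n => [[]]. Qed.

Lemma Gnt : G \notin t.
Proof. by apply/negP => /Hnv; rewrite Hv. Qed.

Lemma memt' x : (x \in rcons t G) = (x == G) || (x \in t).
Proof. by rewrite mem_rcons inE. Qed.

Lemma adjG x : x \in rcons t G -> #|G :&: x| = d -> x \in t /\ G :&: x = G :\ v.
Proof.
rewrite memt' => /orP [/eqP ->|Hx].
  by rewrite setIid HG => /eqP; rewrite eqn_leq ltnn.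
move=> Hc; split => //; apply/eqP; rewrite eqEcard cardR Hc leqnn andbT.
apply/subsetP => y; rewrite !inE => /andP [yG yx]; rewrite yG andbT.
by apply/eqP => Eyv; move: (Hnv Hx); rewrite -Eyv yx.
Qed.

Lemma restrict P : pth (rcons t G) P -> G \notin P -> pth t P.
Proof.
move=> /and4P [H1 H2 H3 H4] nG; apply/and4P; split => //.
apply/allP => x xP; move: (allP H2 x xP); rewrite memt' => /orP [/eqP E|] //.
by move: nG; rewrite -E xP.
Qed.

Lemma mid s1 s2 : pth (rcons t G) (s1 ++ G :: s2) -> s1 = [::] \/ s2 = [::].
Proof.
case/lastP: s1 => [|s1 a]; first by left.
case: s2 => [|b s2]; first by right.
move=> /and4P [_ Hm Hd Hu]; exfalso.
rewrite caps_cat caps_rcons2 in Hd Hu.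
have ma : a \in rcons t G by apply: (allP Hm); rewrite mem_cat mem_rcons mem_head.
have mb : b \in rcons t G by apply: (allP Hm); rewrite mem_cat !inE eqxx !orbT.
move: Hd; rewrite all_cat all_rcons /= => /andP [/andP [/eqP da _] /andP [/eqP db _]].
have [_ Ea] : a \in t /\ G :&: a = G :\ v by apply: adjG => //; rewrite setIC.
have [_ Eb] := adjG mb db.
move: Hu; rewrite cat_uniq => /and3P [_ /negP H _]; apply: H.
apply/hasP; exists (G :&: b); first by rewrite /= mem_head.
by rewrite mem_rcons inE Eb -Ea setIC eqxx.
Qed.

Lemma ends a : ~ pth (rcons t G) (G :: rcons a G).
Proof.
case: a => [|b a] /and4P [_ Hm Hd Hu].
  by move: Hd; rewrite /= setIid HG eqn_leq ltnn.
have Ec : caps (G :: rcons (b :: a) G) = (G :&: b) :: rcons (caps (b :: a)) (last b a :&: G).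
  by rewrite -caps_rcons.
rewrite Ec in Hd Hu.
have mb : b \in rcons t G by apply: (allP Hm); rewrite /= !inE eqxx !orbT.
have ml : last b a \in rcons t G.
  apply: (allP Hm); rewrite inE; apply/orP; right.
  by rewrite -[rcons _ _]/(rcons (b :: a) G) mem_rcons inE mem_last orbT.
move: Hd; rewrite /= all_rcons => /andP [/eqP db /andP [/eqP dl _]].
have [_ Eb] := adjG mb db.
have [_ El] : last b a \in t /\ G :&: last b a = G :\ v by apply: adjG => //; rewrite setIC.
move: Hu => /= /andP [/negP H _]; apply: H.
by rewrite mem_rcons inE Eb -El setIC eqxx.
Qed.

Lemma Ghead P : pth (rcons t G) (G :: P) -> G \notin P.
Proof.
move=> HP0; apply/negP => /splitPr E; case: E HP0 => a1 a2 HP.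
have := mid (s1 := G :: a1) (s2 := a2) HP.
case => // E; subst a2; move: HP; rewrite cats1 => HP.
by have := ends HP.
Qed.

Lemma Gloc P : pth (rcons t G) P -> G \in P ->
  exists P1, G \notin P1 /\ (P = G :: P1 \/ P = rev (G :: P1)).
Proof.
move=> HP /splitPr E; case: E HP => s1 s2 HP.
case: (mid HP) => E; subst.
  by exists s2; split; [exact: Ghead HP | left].
have HP' : pth (rcons t G) (G :: rev s1) by rewrite -rev_rcons pth_rev -[rcons s1 G]cats1.
exists (rev s1); split; first exact: Ghead HP'.
by right; rewrite rev_cons revK cats1.
Qed.

Lemma conv_step : conv t -> conv (rcons t G).
Proof.
move=> IH.
have key : forall P1 k, pth (rcons t G) (G :: P1) -> G \notin P1 -> k \subset G ->
    k \subset last G P1 -> all (fun c => k \subset c) (caps (G :: P1)).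
  move=> P1 k; case: P1 => [|y P2] // HP1 nG kG kl.
  have HyP : pth t (y :: P2) by apply: restrict (pth_tail HP1 isT) nG.
  have yt : y \in rcons t G by case/and4P: HP1 => _ /= /and3P [].
  have dy : #|G :&: y| = d by case/and4P: HP1 => _ _ /= /andP [/eqP].
  have [_ Ey] := adjG yt dy.
  have lt : last y P2 \in t by case/and4P: HyP => _ /allP -> //; rewrite mem_last.
  have kR : k \subset G :\ v.
    rewrite subsetD1 kG /=; apply/negP => vk; move: (Hnv lt).
    by rewrite (subsetP kl).
  rewrite /= Ey kR /=; apply: IH HyP _ _ => //=.
  by apply: subset_trans kR _; rewrite -Ey subsetIr.
move=> P k HP Hh Hl.
case GP: (G \in P); last exact: IH (restrict HP (negbT GP)) Hh Hl.
case: (Gloc HP GP) => P1 [nG [E|E]]; subst P.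
  exact: key.
rewrite caps_rev all_rev; apply: key => //; first by rewrite -pth_rev.
  by move: Hl; rewrite lastrev.
by move: Hh; rewrite headrev.
Qed.

End Step.

Lemma conv_stk t : stk t -> conv t.
Proof.
elim => [F HF|t0 G v F _ IH HG Hv Hnv _ _]; first exact: conv1.
exact: (conv_step HG Hv Hnv IH).
Qed.


Definition fc t h := has (fun F : {set V} => h \subset F) t.
Definition hypr t h k := forall c, #|c| = d -> fc t c -> ~~ (h :|: k \subset c).
Definition uniqpath t h k := exists P, pb t h k P /\ forall Q, pb t h k Q -> Q = P.

Lemma uniq_sym t h k : uniqpath t k h -> uniqpath t h k.
Proof.
case=> P [HP HU]; exists (rev P); split; first by rewrite pb_rev revK.
by move=> Q HQ; rewrite -(HU (rev Q)) ?revK // -pb_rev.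
Qed.

Lemma hypr_sym t h k : hypr t h k -> hypr t k h.
Proof. by move=> H c Hc Hf; rewrite setUC; apply: H. Qed.

Lemma pth1 (F : {set V}) Q : #|F| = d.+1 -> pth [:: F] Q -> Q = [:: F].
Proof.
move=> HF; case: Q => [|x [|y Q]] //.
  by case/and4P => _ /= /andP []; rewrite inE => /eqP ->.
case/and4P => _ /= /and3P []; rewrite !inE => /eqP -> /eqP -> _ /andP [].
by rewrite setIid HF eqn_leq ltnn.
Qed.

Lemma main1 (F : {set V}) h k : #|F| = d.+1 -> fc [:: F] h -> fc [:: F] k -> uniqpath [:: F] h k.
Proof.
move=> HF /= /orP [hF|//] /orP [kF|//]; exists [:: F]; split.
  by rewrite /pb /pth /sc /= hF kF mem_head.
by move=> Q /and3P [HQ _ _]; apply: pth1 HQ.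
Qed.

Lemma conv_end t Q k : conv t -> pth t Q -> 1 < size Q -> k \subset head set0 Q ->
  sc k (rev Q) -> False.
Proof.
move=> Hc HQ sQ kh /andP [kl]; rewrite size_rev sQ /= => /negP; apply.
move: kl; rewrite nth0 headrev => kl.
have := Hc (rev Q) k; rewrite pth_rev headrev lastrev => /(_ HQ kl kh).
by move=> /allP; apply; rewrite -headrev -nth0; apply: firstcap; rewrite size_rev.
Qed.

Lemma sc_rcons k s x : 1 < size s -> sc k (rcons s x) = sc k s.
Proof.
move=> ss; rewrite /sc !nth_rcons size_rcons ss (ltn_trans _ ss) //.
by rewrite (ltn_trans ss).
Qed.

Section Step2.
Variables (t : seq {set V}) (G : {set V}) (v : V) (F0 : {set V}).
Hypotheses (HG : #|G| = d.+1) (Hv : v \in G)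
  (Hnv : forall U, U \in t -> v \notin U) (HF0 : F0 \in t) (HR : G :\ v \subset F0)
  (Hct : conv t)
  (IH : forall h k, fc t h -> fc t k -> hypr t h k -> uniqpath t h k).

Let t' := rcons t G.
Let R := G :\ v.

Lemma fc' x : fc t' x = fc t x || (x \subset G).
Proof. by rewrite /fc /t' has_rcons orbC. Qed.

Lemma fcv x : fc t' x -> v \in x -> x \subset G.
Proof.
rewrite fc' => /orP [/hasP [U Ut xU] vx|//].
by move: (Hnv Ut); rewrite (subsetP xU).
Qed.

Lemma fcnv x : fc t' x -> v \notin x -> fc t x.
Proof.
rewrite fc' => /orP [//|xG vx]; apply/hasP; exists F0 => //.
by apply: subset_trans HR; rewrite subsetD1 xG.
Qed.

Lemma sub_t' : {subset t <= t'}.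
Proof. by move=> x xt; rewrite /t' mem_rcons inE xt orbT. Qed.

Lemma Gt' : G \in t'.
Proof. by rewrite /t' mem_rcons mem_head. Qed.

Lemma hypr_t h k : hypr t' h k -> hypr t h k.
Proof. by move=> H c Hc Hf; apply: H => //; rewrite fc' Hf. Qed.

Lemma headG h Q : pth t' Q -> sc h Q -> v \in h -> exists Q1, Q = G :: Q1 /\ G \notin Q1.
Proof.
case: Q => [|x Q1] // HQ /andP [hx _] vh.
have xt : x \in t' by case/and4P: HQ => _ /andP [].
move: xt; rewrite /t' memt' => /orP [/eqP Ex|xt].
  subst x; exists Q1; split => //; exact: (Ghead HG Hv Hnv HQ).
by move: (Hnv xt); rewrite (subsetP hx).
Qed.

Lemma capG y : y \in t -> R \subset y -> G :&: y = R.
Proof.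
move=> yt Ry; apply/setP => x; rewrite /R !inE.
case: (x =P v) => [->|nxv] /=; first by rewrite (negbTE (Hnv yt)) andbF.
case xG: (x \in G) => //=; apply: (subsetP Ry); by rewrite /R !inE xG andbT; apply/eqP.
Qed.

Lemma caseA h k : v \notin h -> v \notin k -> fc t' h -> fc t' k -> hypr t' h k ->
  uniqpath t' h k.
Proof.
move=> vh vk fh fk hk.
have noG : forall h k Q1, v \notin h -> v \notin k -> hypr t' h k ->
    pb t' h k (G :: Q1) -> False.
  move=> h1 k1 Q1 vh1 vk1 hk1 /and3P [HQ /andP [hG Hs] Hk].
  move: hG => /= hG.
  have hR : h1 \subset R by rewrite /R subsetD1 hG vh1.
  case: Q1 HQ Hs Hk => [|y Q1] HQ Hs Hk.
    move: Hk => /andP [kG _].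
    have kR : k1 \subset R by rewrite /R subsetD1 kG vk1.
    have fR : fc t' R by rewrite fc' subD1set orbT.
    move: (hk1 R (cardR HG Hv) fR).
    by rewrite subUset hR kR.
  have yt : y \in t' by case/and4P: HQ => _ /= /and3P [].
  have dy : #|G :&: y| = d by case/and4P: HQ => _ _ /= /andP [/eqP].
  have [_ Ey] := adjG HG Hv Hnv yt dy.
  by move: Hs; rewrite /= Ey hR.
have [P [HP HU]] := IH (fcnv fh vh) (fcnv fk vk) (hypr_t hk).
exists P; split.
  by case/and3P: HP => HP1 HP2 HP3; apply/and3P; split => //; apply: pth_mono sub_t' HP1.
move=> Q HQ; apply: HU.
case GQ: (G \in Q).
  case/and3P: (HQ) => HQ1 _ _.
  case: (Gloc HG Hv Hnv HQ1 GQ) => Q1 [_ [E|E]]; subst Q.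
    by case: (noG _ _ _ vh vk hk HQ).
  by move: HQ; rewrite pb_rev revK => HQ; case: (noG _ _ _ vk vh (hypr_sym hk) HQ).
case/and3P: HQ => HQ1 HQ2 HQ3; apply/and3P; split => //.
exact: restrict HQ1 (negbT GQ).
Qed.

Lemma cardR' : #|R| = d.
Proof. exact: cardR HG Hv. Qed.

Lemma caseB h k : v \in h -> v \notin k -> fc t' h -> fc t' k -> hypr t' h k ->
  uniqpath t' h k.
Proof.
move=> vh vk fh fk hk.
have hG := fcv fh vh.
have fkt := fcnv fk vk.
have HQG : forall Q, pb t' h k Q -> exists Q1, Q = G :: Q1 /\ G \notin Q1.
  by move=> Q /and3P [HQ Hs _]; apply: headG HQ Hs vh.
case kG: (k \subset G).
  exists [:: G]; split.
    by rewrite /pb /pth /sc /= hG kG Gt'.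
  move=> Q HQ; case: (HQG Q HQ) => [[|y Q1] [E nG]]; subst Q => //.
  case/and3P: HQ => HQ _ Hk.
  exfalso; apply: (conv_end (conv_step HG Hv Hnv Hct) HQ _ _ Hk) => //=.
have fR : fc t R by apply/hasP; exists F0.
have hRk : hypr t R k.
  move=> c Hc fc0; apply/negP; rewrite subUset => /andP [Rc kc].
  have EcR : c = R by apply/eqP; rewrite eq_sym eqEcard Rc Hc cardR' leqnn.
  by move: kG; rewrite (subset_trans kc) // EcR subsetDl.
have [T [HT HU]] := IH fR fkt hRk.
case/and3P: (HT) => HT1 HTs HT3.
case: T HT HU HT1 HTs HT3 => [|y T] HT HU HT1 HTs HT3; first by case/and4P: HT1.
have yt : y \in t by case/and4P: HT1 => _ /andP [].
have Ry : R \subset y by case/andP: HTs.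
have Ey := capG yt Ry.
exists (G :: y :: T); split.
  apply/and3P; split.
  - case/and4P: (HT1) => _ Hm Hd Hu.
    apply/and4P; split => //.
    + apply/allP => x; rewrite inE => /orP [/eqP ->|xT]; first exact: Gt'.
      exact: sub_t' (allP Hm x xT).
    + by rewrite [caps _]/= /= Ey cardR' eqxx.
    + rewrite [caps _]/= cons_uniq Ey Hu andbT; apply/negP => RT.
      by have := sc_caps Hct HT1 HTs RT; rewrite subxx.
  - rewrite /sc /= hG /=; apply/negP => /subsetP /(_ v vh).
    by rewrite inE (negbTE (Hnv yt)) andbF.
  - rewrite rev_cons; case sT: (1 < size (y :: T)).
      by rewrite sc_rcons ?size_rev.
    case: T {HT HU HT1 HTs} HT3 sT => [|w T] HT3 sT //.
    move: HT3; rewrite /sc /= => /andP [ky _]; rewrite ky /=.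
    by apply/negP => /subset_trans /(_ (subsetIr _ _)); rewrite kG.
move=> Q HQ; case: (HQG Q HQ) => Q1 [E nG]; subst Q.
case/and3P: HQ => HQ1 HQ2 HQ3.
case: Q1 nG HQ1 HQ2 HQ3 => [|z Q1] nG HQ1 HQ2 HQ3.
  by move: HQ3 => /andP [/= kG']; rewrite kG in kG'.
have zt' : z \in t' by case/and4P: HQ1 => _ /= /and3P [].
have dz : #|G :&: z| = d by case/and4P: HQ1 => _ _ /= /andP [/eqP].
have [zt Ez] := adjG HG Hv Hnv zt' dz.
congr cons; apply: HU; apply/and3P; split.
- exact: restrict (pth_tail HQ1 isT) nG.
- rewrite /sc /= (_ : R \subset z) /=; last by rewrite /R -Ez subsetIr.
  case: Q1 {nG HQ2 HQ3} HQ1 => [|w Q1] HQ1 //=; apply/negP => Rzw.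
  case/and4P: HQ1 => _ _ /= /and3P [_ /eqP dzw _] /andP [/negP nin _].
  apply: nin; rewrite Ez.
  have -> : G :\ v = z :&: w by apply/eqP; rewrite eqEcard -/R Rzw dzw cardR' leqnn.
  by rewrite mem_head.
- move: HQ3; rewrite rev_cons; case sT: (1 < size (z :: Q1)).
    by rewrite sc_rcons ?size_rev.
  case: Q1 {nG HQ1 HQ2} sT => [|w Q1] sT //.
  by rewrite /sc /= => /andP [kz _]; rewrite kz.
Qed.

Lemma main_step h k : fc t' h -> fc t' k -> hypr t' h k -> uniqpath t' h k.
Proof.
move=> fh fk hk.
case vh: (v \in h); case vk: (v \in k).
- exists [:: G]; split.
    by rewrite /pb /pth /sc /= (fcv fh vh) (fcv fk vk) Gt'.
  move=> Q HQ; case/and3P: (HQ) => HQ1 HQ2 HQ3.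
  case: (headG HQ1 HQ2 vh) => [[|y Q1] [E nG]]; subst Q => //.
  move: HQ3 => /andP [kl _]; move: kl; rewrite nth0 headrev /= => kl.
  have lm : last y Q1 \in y :: Q1 by apply: mem_last.
  have lt' : last y Q1 \in t' by case/and4P: HQ1 => _ /allP H _ _; apply: H; rewrite inE lm orbT.
  move: lt'; rewrite /t' memt' => /orP [/eqP El|lt].
    by move: nG; rewrite -El lm.
  by move: (Hnv lt); rewrite (subsetP kl).
- by apply: caseB => //; rewrite vk.
- apply: uniq_sym; apply: caseB => //; [by rewrite vh | exact: hypr_sym].
- by apply: caseA => //; rewrite ?vh ?vk.
Qed.

End Step2.

Lemma main_stk t : stk t -> forall h k, fc t h -> fc t k -> hypr t h k -> uniqpath t h k.
Proof.
elim => [F HF|t0 G v F Hs IH HG Hv Hnv HF HR] h k fh fk hk; first exact: main1.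
exact: (main_step HG Hv Hnv HF HR (conv_stk Hs) IH fh fk hk).
Qed.

End Stk.

Lemma consec_capsE (V : finType) (Q : seq {set V}) : consec_caps Q = caps Q.
Proof.
elim: Q => [|x Q IH] //; case: Q IH => [|y Q] IH //.
have -> : caps [:: x, y & Q] = (x :&: y) :: caps (y :: Q) by [].
rewrite -IH /consec_caps /=; congr cons.
rewrite -[1]/(1 + 0) iotaDl -map_comp; apply: eq_map => i //.
Qed.

Lemma nthrev0 (V : finType) (Q : seq {set V}) : Q != [::] ->
  nth set0 (rev Q) 0 = nth set0 Q (size Q).-1.
Proof. by move=> Qn; rewrite nth_rev ?subn1 // lt0n size_eq0. Qed.

Lemma nthrev1 (V : finType) (Q : seq {set V}) : 1 < size Q ->
  nth set0 (rev Q) 1 = nth set0 Q (size Q).-2.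
Proof. by move=> Qn; rewrite nth_rev ?subn2. Qed.

Lemma bridge (V : finType) (X : {set {set V}}) d (s : seq {set V}) h k Q :
  (forall F, (F \in s) = facet X F) -> path_between X d h k Q <-> pb d s h k Q.
Proof.
move=> Hs.
have Hm : (forall f, f \in Q -> facet X f) <-> all (fun x => x \in s) Q.
  by split => [H|/allP H f /H]; [apply/allP => f /H; rewrite Hs | rewrite Hs].
have Hsz : (forall i, i.+1 < size Q -> #|nth set0 Q i :&: nth set0 Q i.+1| = d) <->
    all (fun c : {set V} => #|c| == d) (caps Q).
  rewrite -consec_capsE /consec_caps all_map; split => [H|/allP H i Hi].
    apply/allP => i; rewrite mem_iota add0n => /andP [_ Hi]; apply/eqP; apply: H.
    by case: (size Q) Hi.
  apply/eqP; apply: (H i); rewrite mem_iota add0n /=.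
  by case: (size Q) Hi.
rewrite /path_between /cpath /walk /pb /pth consec_capsE.
split.
  move=> [[[Qn [Hf Hw]] Hu] [h0 [k0 H2]]].
  apply/and3P; split.
  - by apply/and4P; split => //; [apply/Hm | apply/Hsz].
  - by rewrite /sc h0 /=; apply/implyP => /H2 [].
  - rewrite /sc size_rev nthrev0 // k0 /=; apply/implyP => sQ.
    by rewrite nthrev1 //; case: (H2 sQ).
case/and3P => /and4P [Qn Hf Hw Hu] /andP [h0 h1] /andP [k0 k1].
move: k0 k1; rewrite size_rev nthrev0 // => k0 k1.
split; first by split => //; split => //; split; [apply/Hm | apply/Hsz].
split => //; split => //.
move=> sQ; split; first by move/implyP: h1; apply.
by move/implyP: k1 => /(_ sQ); rewrite nthrev1.
Qed.

Lemma stk_of (V : finType) (X : {set {set V}}) d (s : seq {set V}) : pure X d -> stacking_order X s -> stk d s.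
Proof.
move=> Hp [sn [su [Hs Hst]]].
have Hsz : forall F, F \in s -> #|F| = d.+1 by move=> F; rewrite Hs; apply: Hp.
suff H : forall n, 0 < n -> n <= size s -> stk d (take n s).
  by rewrite -(take_size s); apply: H => //; case: (s) sn.
elim => [|n IHn] // _ Hn; case: n IHn Hn => [|n] IHn Hn.
  case: (s) sn Hsz => [|x s'] // _ Hsz /=; rewrite take0.
  by apply: stk1; apply: Hsz; rewrite mem_head.
rewrite (take_nth set0 Hn).
have [v [E [j Hj HG]]] := Hst n.+1 Hn.
have : v \in [set x in nth set0 s n.+1 | x \notin \bigcup_(j < n.+1) nth set0 s j].
  by rewrite E set11.
rewrite inE => /andP [vG vnot].
apply: (stkS (v := v) (F := nth set0 s j)) => //.
- by apply: IHn => //; apply: ltnW.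
- by apply: Hsz; rewrite mem_nth.
- move=> U /(nthP set0) [i]; rewrite size_take Hn => Hi <-.
  rewrite nth_take //; apply/negP => vU; move/negP: vnot; apply.
  by apply/bigcupP; exists (Ordinal Hi).
- rewrite -(nth_take set0 Hj); by apply: mem_nth; rewrite size_take Hn.
Qed.

Theorem lemma2p9 (V : finType) (X : {set {set V}}) (d : nat) (h k : {set V}) :
  simplicial_complex X -> stacked X d ->
  h \in X -> k \in X ->
  (forall c, codim1_face X d c -> ~~ (h :|: k \subset c)) ->
  exists! s : seq {set V}, path_between X d h k s.
Proof.
move=> [Hcl Hcov] [Hpure [s Hso]] hX kX Hhk.
have stks := stk_of Hpure Hso.
case: Hso => _ [_ [Hs _]].
have fcX : forall x, x \in X -> fc s x.
  move=> x xX.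
  have i0P : (x \in X) && (x \subset x) by rewrite xX subxx.
  have [F /andP [FX xF] Hmax] := @arg_maxnP _ x (fun F => (F \in X) && (x \subset F))
     (fun F => #|F|) i0P.
  apply/hasP; exists F => //; rewrite Hs /facet FX /=.
  apply/forall_inP => G GX; apply/implyP => FG.
  have := Hmax G; rewrite GX (subset_trans xF FG) => /(_ isT) HGF.
  by rewrite eq_sym eqEcard FG /=; exact: HGF.
have hyp : hypr d s h k.
  move=> c Hc /hasP [F Fs cF]; apply: Hhk; rewrite /codim1_face Hc eqxx andbT.
  by apply: Hcl cF; move: Fs; rewrite Hs => /andP [].
have [P [HP HU]] := main_stk stks (fcX h hX) (fcX k kX) hyp.
exists P; split; first exact: ((@bridge V X d s h k P Hs).2 HP).
by move=> Q /(@bridge V X d s h k Q Hs).1 /HU ->.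
Qed.
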